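(* Let $M$ be a complete pointed metric space. If $(m_{x_ny_n})_n$ is a sequence of molecules in $\mathcal F(M)$ which converges weakly to some $\mu\in\mathcal F(M)$, then there exist $x\neq y$ in $M$ such that $\mu=m_{xy}$, and $(m_{x_ny_n})$ converges in norm to $m_{xy}$.
   Context: A pointed metric space $M$ has a distinguished origin $0$. $\mathrm{Lip}_0(M)$ is the Banach space of real Lipschitz functions on $M$ vanishing at $0$ with the best Lipschitz constant as norm; $\delta(x)\in\mathrm{Lip}_0(M)^*$ is evaluation at $x$, and the Lipschitz free space $\mathcal F(M)$ is the closed linear span of $\delta(M)$ in $\mathrm{Lip}_0(M)^*$, with $\mathcal F(M)^*=\mathrm{Lip}_0(M)$. The molecule is $m_{xy}=(\delta(x)-\delta(y))/d(x,y)$ for $x\neq y$. *)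

(* Defs.v *)
From Stdlib Require Import Reals Lra List.
Open Scope R_scope.
Set Implicit Arguments.

Section LipFree.
Variables (T : Type) (d : T -> T -> R).

Definition is_metric : Prop :=
  (forall x y, 0 <= d x y) /\
  (forall x y, d x y = 0 <-> x = y) /\
  (forall x y, d x y = d y x) /\
  (forall x y z, d x z <= d x y + d y z).

Definition complete_metric : Prop :=
  forall u : nat -> T,
    (forall eps, 0 < eps -> exists N, forall m n, (N <= m)%nat -> (N <= n)%nat ->
        d (u m) (u n) < eps) ->
    exists l, forall eps, 0 < eps -> exists N, forall n, (N <= n)%nat -> d (u n) l < eps.

Variable o : T.

Definition lipschitz_with (L : R) (f : T -> R) : Prop :=
  forall x y, Rabs (f x - f y) <= L * d x y.

Definition Lip0 (f : T -> R) : Prop := f o = 0 /\ exists L, lipschitz_with L f.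

Definition Lip0_ball (f : T -> R) : Prop := f o = 0 /\ lipschitz_with 1 f.

(** Functionals on Lip_0(M), represented as maps (T -> R) -> R; only their
    values on Lip_0(M) matter. *)
Definition functional := (T -> R) -> R.

Definition dual_norm_le (mu : functional) (c : R) : Prop :=
  forall f, Lip0_ball f -> Rabs (mu f) <= c.

Definition fsub (mu nu : functional) : functional := fun f => mu f - nu f.

Definition delta (x : T) : functional := fun f => f x.

Definition comb (l : list (R * T)) : functional :=
  fun f => fold_right (fun p s => fst p * f (snd p) + s) 0 l.

Definition in_dual (mu : functional) : Prop :=
  (forall f g a b, Lip0 f -> Lip0 g ->
     mu (fun t => a * f t + b * g t) = a * mu f + b * mu g) /\
  (exists C, dual_norm_le mu C).

(** mu belongs to the Lipschitz free space F(M): the norm closure of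
    span delta(M) in Lip_0(M)^* *)
Definition in_free (mu : functional) : Prop :=
  in_dual mu /\
  forall eps, 0 < eps -> exists l, dual_norm_le (fsub mu (comb l)) eps.

Definition feq (mu nu : functional) : Prop := forall f, Lip0 f -> mu f = nu f.

Definition molecule (x y : T) : functional := fun f => (f x - f y) / d x y.

Definition in_free_dual (phi : functional -> R) : Prop :=
  (forall mu nu a b, in_free mu -> in_free nu ->
     phi (fun f => a * mu f + b * nu f) = a * phi mu + b * phi nu) /\
  (exists C, forall mu c, in_free mu -> dual_norm_le mu c -> Rabs (phi mu) <= C * c).

Definition weak_cv (s : nat -> functional) (mu : functional) : Prop :=
  forall phi, in_free_dual phi -> Un_cv (fun n => phi (s n)) (phi mu).

Definition norm_cv (s : nat -> functional) (mu : functional) : Prop :=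
  forall eps, 0 < eps -> exists N, forall n, (N <= n)%nat ->
    dual_norm_le (fsub (s n) mu) eps.

End LipFree.

(* Main.v *)
Require Import Defs.
From Stdlib Require Import Reals Lra List Arith Lia Classical ClassicalEpsilon.
Open Scope R_scope.

Section Main.
Variables (T : Type) (d : T -> T -> R) (o : T).
Hypothesis Hd : is_metric d.

Lemma d_nn x y : 0 <= d x y.
Proof. destruct Hd as [H _]; apply H. Qed.
Lemma d_sym x y : d x y = d y x.
Proof. destruct Hd as [_ [_ [H _]]]; apply H. Qed.
Lemma d_tri x y z : d x z <= d x y + d y z.
Proof. destruct Hd as [_ [_ [_ H]]]; apply H. Qed.
Lemma d_refl x : d x x = 0.
Proof. destruct Hd as [_ [H _]]; apply H; reflexivity. Qed.
Lemma d_pos x y : x <> y -> 0 < d x y.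
Proof.
  intro Hxy. destruct (d_nn x y) as [h|h]; auto.
  exfalso; apply Hxy. destruct Hd as [_ [H _]]; apply H; auto.
Qed.
Lemma d_eq0 x y : d x y = 0 -> x = y.
Proof. destruct Hd as [_ [H _]]; apply H. Qed.

Definition Eset (e : nat -> T) (t : T) : R -> Prop := fun r => exists i, r = - d t (e i).
Lemma Eset_bound e t : bound (Eset e t).
Proof. exists 0. intros r [i Hi]; rewrite Hi. pose proof (d_nn t (e i)); lra. Qed.
Lemma Eset_ne e t : exists r, Eset e t r.
Proof. exists (- d t (e 0%nat)), 0%nat; reflexivity. Qed.
Definition Dinf (e : nat -> T) (t : T) : R :=
  - proj1_sig (completeness (Eset e t) (Eset_bound e t) (Eset_ne e t)).

Lemma Dinf_le e t i : Dinf e t <= d t (e i).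
Proof.
  unfold Dinf. pose proof (proj2_sig (completeness (Eset e t) (Eset_bound e t) (Eset_ne e t))) as [Hub _].
  set (m := proj1_sig _) in *.
  assert (- d t (e i) <= m) by (apply Hub; exists i; reflexivity). lra.
Qed.
Lemma Dinf_ge e t c : (forall i, c <= d t (e i)) -> c <= Dinf e t.
Proof.
  intro H. unfold Dinf. pose proof (proj2_sig (completeness (Eset e t) (Eset_bound e t) (Eset_ne e t))) as [_ Hl].
  set (m := proj1_sig _) in *.
  assert (m <= - c). { apply Hl. intros r [i Hi]; rewrite Hi. specialize (H i). lra. }
  lra.
Qed.
Lemma Dinf_nn e t : 0 <= Dinf e t.
Proof. apply Dinf_ge. intros; apply d_nn. Qed.
Lemma Dinf_lip e s t : Dinf e s <= d s t + Dinf e t.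
Proof.
  assert (Dinf e s - d s t <= Dinf e t); [|lra].
  apply Dinf_ge. intro i. pose proof (Dinf_le e s i). pose proof (d_tri s t (e i)). lra.
Qed.
Lemma Dinf_ball e : Lip0_ball d o (fun t => Dinf e t - Dinf e o).
Proof.
  split; [lra|]. intros x y. rewrite Rmult_1_l.
  pose proof (Dinf_lip e x y). pose proof (Dinf_lip e y x). rewrite (d_sym y x) in H0.
  apply Rabs_le; lra.
Qed.

Definition dd (a b : nat -> T) n := d (a n) (b n).
Definition HC (a b : nat -> T) : Prop :=
  forall f, Lip0_ball d o f -> exists L, Un_cv (fun n => (f (a n) - f (b n)) / d (a n) (b n)) L.

Lemma HC_swap a b : HC a b -> HC b a.
Proof.
  intros H f Hf. destruct (H f Hf) as [L HL]. exists (- L).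
  intros eps Heps. destruct (HL eps Heps) as [N HN]. exists N. intros n Hn.
  specialize (HN n Hn). unfold R_dist in *.
  replace ((f (b n) - f (a n)) / d (b n) (a n) - - L) with
    (- ((f (a n) - f (b n)) / d (a n) (b n) - L)).
  - rewrite Rabs_Ropp; auto.
  - rewrite (d_sym (b n) (a n)). unfold Rdiv. ring.
Qed.

Lemma mono_ge (phi : nat -> nat) : (forall k, (phi k < phi (S k))%nat) -> forall k, (k <= phi k)%nat.
Proof. intros H k; induction k; [lia|]. specialize (H k); lia. Qed.

Lemma SC a b (Hab : forall n, a n <> b n) (H : HC a b) c (hc0 : 0 < c) (hc1 : c <= 1)
  (phi : nat -> nat) (mono : forall k, (phi k < phi (S k))%nat)
  (Hsep : forall j k, j <> k ->
     c * d (a (phi k)) (b (phi k)) <= d (a (phi k)) (a (phi j)) /\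
     c * d (a (phi k)) (b (phi k)) <= d (a (phi k)) (b (phi j))) : False.
Proof.
  set (e := fun i => if Nat.even i then b (phi i) else a (phi i)).
  destruct (H _ (Dinf_ball e)) as [L HL].
  destruct (HL (c/2)) as [N HN]; [lra|].
  assert (H1 := HN (phi (2*N)%nat)). assert (H2 := HN (phi (2*N+1)%nat)).
  pose proof (mono_ge phi mono (2*N)%nat). pose proof (mono_ge phi mono (2*N+1)%nat).
  specialize (H1 ltac:(lia)). specialize (H2 ltac:(lia)).
  unfold R_dist in H1, H2.
  set (n1 := phi (2*N)%nat) in *. set (n2 := phi (2*N+1)%nat) in *.
  assert (e1 : e (2*N)%nat = b n1) by (unfold e; rewrite Nat.even_even; reflexivity).
  assert (e2 : e (2*N+1)%nat = a n2) by (unfold e; rewrite Nat.even_odd; reflexivity).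
  assert (Db1 : Dinf e (b n1) = 0).
  { pose proof (Dinf_le e (b n1) (2*N)%nat) as Hq. rewrite e1, d_refl in Hq.
    pose proof (Dinf_nn e (b n1)); lra. }
  assert (Da2 : Dinf e (a n2) = 0).
  { pose proof (Dinf_le e (a n2) (2*N+1)%nat) as Hq. rewrite e2, d_refl in Hq.
    pose proof (Dinf_nn e (a n2)); lra. }
  assert (p1 : 0 < d (a n1) (b n1)) by (apply d_pos; auto).
  assert (p2 : 0 < d (a n2) (b n2)) by (apply d_pos; auto).
  assert (Da1 : c * d (a n1) (b n1) <= Dinf e (a n1)).
  { apply Dinf_ge. intro i. destruct (Nat.eq_dec i (2*N)) as [->|hne].
    - rewrite e1. nra.
    - destruct (Hsep i (2*N)%nat hne) as [h1 h2]. fold n1 in h1, h2.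
      unfold e; destruct (Nat.even i); auto. }
  pose proof (Dinf_nn e (b n2)).
  assert (c <= (Dinf e (a n1) - Dinf e o - (Dinf e (b n1) - Dinf e o)) / d (a n1) (b n1)).
  { rewrite Db1. apply Rmult_le_reg_r with (d (a n1) (b n1)); auto.
    unfold Rdiv. rewrite Rmult_assoc, Rinv_l by lra. lra. }
  assert ((Dinf e (a n2) - Dinf e o - (Dinf e (b n2) - Dinf e o)) / d (a n2) (b n2) <= 0).
  { rewrite Da2. replace (0 - Dinf e o - (Dinf e (b n2) - Dinf e o)) with (- Dinf e (b n2)) by ring.
    unfold Rdiv. assert (0 < / d (a n2) (b n2)) by (apply Rinv_0_lt_compat; auto). nra. }
  apply Rabs_def2 in H1. apply Rabs_def2 in H2. lra.
Qed.


Fixpoint histF (g : list nat -> nat) (k : nat) : list nat :=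
  match k with O => nil | S k' => histF g k' ++ (g (histF g k') :: nil) end.

Lemma greedy (U : nat -> Prop) (P : nat -> nat -> Prop) :
  (forall l : list nat, (forall j, In j l -> U j) -> forall N, exists m, (N <= m)%nat /\ U m /\ forall j, In j l -> P j m) ->
  exists phi : nat -> nat, (forall k, (phi k < phi (S k))%nat) /\ (forall k, U (phi k)) /\
     forall j k, (j < k)%nat -> P (phi j) (phi k).
Proof.
  intro H.
  assert (Hp : forall l N, exists m, (forall j, In j l -> U j) -> (N <= m)%nat /\ U m /\ forall j, In j l -> P j m).
  { intros l N. destruct (classic (forall j, In j l -> U j)) as [h|h].
    - destruct (H l h N) as [m hm]. exists m; auto.
    - exists O; intro; contradiction. }
  set (pk := fun l N => proj1_sig (constructive_indefinite_description _ (Hp l N))).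
  assert (Hpk : forall l N, (forall j, In j l -> U j) -> (N <= pk l N)%nat /\ U (pk l N) /\ forall j, In j l -> P j (pk l N)).
  { intros l N. exact (proj2_sig (constructive_indefinite_description _ (Hp l N))). }
  set (g := fun l => pk l (S (list_max l))).
  set (phi := fun k => g (histF g k)).
  assert (Hall : forall k j, In j (histF g k) -> U j).
  { induction k; simpl; intros j hj; [contradiction|].
    apply in_app_or in hj. destruct hj as [hj|[hj|[]]]; auto.
    subst j. apply (Hpk _ _ IHk). }
  assert (Hin : forall k j, (j < k)%nat -> In (phi j) (histF g k)).
  { induction k; intros j hj; [lia|]. simpl. apply in_or_app.
    destruct (Nat.eq_dec j k) as [->|hne]; [right; left; reflexivity|].
    left; apply IHk; lia. }
  exists phi. split; [|split].
  - intro k. assert (In (phi k) (histF g (S k))) by (apply Hin; lia).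
    assert (phi k <= list_max (histF g (S k)))%nat.
    { assert (Forall (fun x => x <= list_max (histF g (S k)))%nat (histF g (S k))).
      { apply list_max_le. lia. }
      rewrite Forall_forall in H1. auto. }
    destruct (Hpk (histF g (S k)) (S (list_max (histF g (S k)))) (Hall (S k))) as [h _].
    change (phi (S k)) with (pk (histF g (S k)) (S (list_max (histF g (S k))))). lia.
  - intro k. apply (Hpk _ _ (Hall k)).
  - intros j k hjk. apply (Hpk _ _ (Hall k)). apply Hin; auto.
Qed.

Definition infS (S : nat -> Prop) : Prop := forall N, exists n, (N <= n)%nat /\ S n.

Lemma eventually_list (U : nat -> Prop) (P : nat -> nat -> Prop) :
  infS U -> (forall j, U j -> exists Nj, forall m, (Nj <= m)%nat -> U m -> P j m) ->
  forall l : list nat, (forall j, In j l -> U j) -> forall N, exists m, (N <= m)%nat /\ U m /\ forall j, In j l -> P j m.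
Proof.
  intros HU HP l.
  assert (forall l : list nat, (forall j, In j l -> U j) -> exists B, forall m, (B <= m)%nat -> U m -> forall j, In j l -> P j m).
  { clear l. intro l. induction l as [|j l IH]; intros hl.
    - exists O. intros m _ _ j [].
    - destruct IH as [B HB]. { intros; apply hl; right; auto. }
      destruct (HP j (hl j (or_introl eq_refl))) as [Nj HNj].
      exists (Nat.max B Nj). intros m hm Um i [<-|hi].
      + apply HNj; auto; lia.
      + apply HB; auto; lia. }
  intros hl N. destruct (H l hl) as [B HB]. destruct (HU (Nat.max N B)) as [m [hm Um]].
  exists m. split; [lia|]. split; auto. apply HB; auto; lia.
Qed.

Definition Psep (a b : nat -> T) (c : R) (j m : nat) : Prop :=
  c * d (a m) (b m) <= d (a m) (a j) /\ c * d (a m) (b m) <= d (a m) (b j) /\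
  c * d (a j) (b j) <= d (a j) (a m) /\ c * d (a j) (b j) <= d (a j) (b m).

Lemma SC2 a b (Hab : forall n, a n <> b n) (H : HC a b) c (hc0 : 0 < c) (hc1 : c <= 1) (U : nat -> Prop) :
  infS U -> (forall j, U j -> exists Nj, forall m, (Nj <= m)%nat -> U m -> Psep a b c j m) -> False.
Proof.
  intros HU HP. destruct (greedy U (Psep a b c) (eventually_list U _ HU HP)) as [phi [mono [_ Hs]]].
  apply (SC a b Hab H c hc0 hc1 phi mono).
  intros j k hne. destruct (Nat.lt_gt_cases j k) as [[hl|hl] _]; [exact hne| |].
  - destruct (Hs j k hl) as [h1 [h2 _]]. auto.
  - destruct (Hs k j hl) as [_ [_ [h3 h4]]]. auto.
Qed.

Definition conv_along (S : nat -> Prop) (p : nat -> T) (x : T) : Prop :=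
  forall eps, 0 < eps -> exists N, forall n, (N <= n)%nat -> S n -> d (p n) x < eps.
Definition to_inf (S : nat -> Prop) (u : nat -> R) : Prop :=
  forall M, exists N, forall n, (N <= n)%nat -> S n -> M <= u n.

Lemma K1core a b (Hab : forall n, a n <> b n) (H : HC a b) S x
  (Ha : conv_along S a x) (Hb : conv_along S b x)
  (HU : infS (fun m => S m /\ d (a m) (b m) / 2 <= d (a m) x)) : False.
Proof.
  apply (SC2 a b Hab H (1/4) ltac:(lra) ltac:(lra) _ HU).
  intros j [Sj Uj]. pose proof (d_pos _ _ (Hab j)) as pj.
  assert (Heps : exists eps, 0 < eps /\ eps <= d (a j) (b j) / 4 /\ eps <= d (a j) x / 2 /\
            (d (b j) x = 0 \/ eps <= d (b j) x / 2)).
  { destruct (Rle_lt_dec (d (b j) x) 0) as [h|h].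
    - exists (d (a j) (b j) / 4). pose proof (d_nn (b j) x). repeat split; try lra; left; lra.
    - exists (Rmin (d (a j) (b j) / 4) (d (b j) x / 2)).
      pose proof (Rmin_l (d (a j) (b j) / 4) (d (b j) x / 2)).
      pose proof (Rmin_r (d (a j) (b j) / 4) (d (b j) x / 2)).
      repeat split; try lra. { apply Rmin_glb_lt; lra. } all: right; lra. }
  destruct Heps as [eps [e0 [e1 [e2 e3]]]].
  destruct (Ha eps e0) as [Na HNa]. destruct (Hb eps e0) as [Nb HNb].
  exists (Nat.max Na Nb). intros m hm [Sm Um].
  specialize (HNa m ltac:(lia) Sm). specialize (HNb m ltac:(lia) Sm).
  pose proof (d_tri (a m) x (b m)). pose proof (d_sym x (b m)).
  pose proof (d_tri (a j) (a m) x). pose proof (d_sym (a j) (a m)).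
  pose proof (d_tri (a j) (b m) x).
  pose proof (d_tri (a m) (b j) x). pose proof (d_sym (b j) x).
  pose proof (d_tri (b j) (a m) x). pose proof (d_sym (b j) (a m)).
  pose proof (d_nn (a m) (b m)).
  unfold Psep. repeat split; try lra.

Qed.

Lemma K1 a b (Hab : forall n, a n <> b n) (H : HC a b) S x (HS : infS S)
  (Ha : conv_along S a x) (Hb : conv_along S b x) : False.
Proof.
  destruct (classic (infS (fun m => S m /\ d (a m) (b m) / 2 <= d (a m) x))) as [h|h].
  - exact (K1core a b Hab H S x Ha Hb h).
  - apply (K1core b a (fun n e => Hab n (eq_sym e)) (HC_swap a b H) S x Hb Ha).
    intro N. apply not_all_ex_not in h. destruct h as [N0 h].
    destruct (HS (Nat.max N N0)) as [n [hn Sn]]. exists n. split; [lia|]. split; auto.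
    destruct (Rle_lt_dec (d (a n) (b n) / 2) (d (a n) x)) as [h'|h'].
    + exfalso. apply h. exists n. split; [lia|]. auto.
    + pose proof (d_tri (a n) x (b n)). pose proof (d_sym x (b n)). pose proof (d_sym (a n) (b n)). lra.
Qed.

Lemma not_inf_ev (S : nat -> Prop) : ~ infS S -> exists N, forall n, (N <= n)%nat -> ~ S n.
Proof.
  intro h. unfold infS in h. apply not_all_ex_not in h. destruct h as [N h].
  exists N. intros n hn Sn. apply h. exists n; auto.
Qed.

Lemma caseA a b (Hab : forall n, a n <> b n) (H : HC a b) S K (HS : infS S)
  (HK : forall n, S n -> d (a n) (b n) <= K) eps (heps : 0 < eps)
  (LF : forall j, S j -> exists N, forall m, (N <= m)%nat -> S m -> eps <= d (a m) (a j)) : False.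
Proof.
  assert (K0 : 0 < K).
  { destruct (HS O) as [n [_ Sn]]. pose proof (d_pos _ _ (Hab n)). specialize (HK n Sn). lra. }
  set (c := Rmin 1 (eps / (4 * K))).
  assert (c0 : 0 < c). { apply Rmin_glb_lt; [lra|]. apply Rdiv_lt_0_compat; lra. }
  assert (c1 : c <= 1) by apply Rmin_l.
  assert (cb : forall m, S m -> c * d (a m) (b m) <= eps / 4).
  { intros m Sm. specialize (HK m Sm). pose proof (d_nn (a m) (b m)).
    assert (c <= eps / (4 * K)) by apply Rmin_r.
    assert (c * d (a m) (b m) <= c * K) by nra.
    assert (eps / (4 * K) * K = eps / 4) by (field; lra).
    nra. }
  destruct (classic (exists j0, S j0 /\ infS (fun m => S m /\ d (b m) (a j0) < eps / 4))) as [[j0 [Sj0 Hj0]]|hn].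
  - set (U := fun m => S m /\ d (b m) (a j0) < eps / 4 /\ eps <= d (a m) (a j0)).
    apply (SC2 a b Hab H c c0 c1 U).
    + intro N. destruct (LF j0 Sj0) as [N0 HN0].
      destruct (Hj0 (Nat.max N N0)) as [m [hm [Sm hb]]].
      exists m. split; [lia|]. split; auto. split; auto. apply HN0; auto; lia.
    + intros j [Sj [hbj haj]]. destruct (LF j Sj) as [Nj HNj]. exists Nj.
      intros m hm [Sm [hbm ham]]. specialize (HNj m hm Sm).
      pose proof (cb m Sm). pose proof (cb j Sj).
      pose proof (d_tri (a m) (b j) (a j0)). pose proof (d_tri (a j) (b m) (a j0)).
      pose proof (d_sym (a j) (a m)).
      unfold Psep. repeat split; lra.
  - assert (ii : forall j, S j -> exists N, forall m, (N <= m)%nat -> S m -> eps / 4 <= d (b m) (a j)).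
    { intros j Sj. destruct (not_inf_ev (fun m => S m /\ d (b m) (a j) < eps / 4)) as [N HN].
      { intro hi. apply hn. exists j; auto. }
      exists N. intros m hm Sm. destruct (Rle_lt_dec (eps/4) (d (b m) (a j))) as [h|h]; auto.
      exfalso; apply (HN m hm); auto. }
    apply (SC2 a b Hab H c c0 c1 S HS).
    intros j Sj. destruct (LF j Sj) as [N1 HN1]. destruct (ii j Sj) as [N2 HN2].
    assert (iii : exists N3, forall m, (N3 <= m)%nat -> S m -> eps / 4 <= d (a m) (b j)).
    { destruct (classic (exists m1, S m1 /\ d (a m1) (b j) < eps / 4)) as [[m1 [Sm1 h1]]|h1].
      - destruct (LF m1 Sm1) as [N3 HN3]. exists N3. intros m hm Sm.
        specialize (HN3 m hm Sm). pose proof (d_tri (a m) (b j) (a m1)). pose proof (d_sym (b j) (a m1)).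
        lra.
      - exists O. intros m _ Sm. destruct (Rle_lt_dec (eps/4) (d (a m) (b j))) as [h|h]; auto.
        exfalso; apply h1; exists m; auto. }
    destruct iii as [N3 HN3].
    exists (Nat.max N1 (Nat.max N2 N3)). intros m hm Sm.
    specialize (HN1 m ltac:(lia) Sm). specialize (HN2 m ltac:(lia) Sm). specialize (HN3 m ltac:(lia) Sm).
    pose proof (cb m Sm). pose proof (cb j Sj). pose proof (d_sym (a j) (a m)). pose proof (d_sym (b m) (a j)).
    unfold Psep. repeat split; lra.
Qed.

Lemma K4i a b (Hab : forall n, a n <> b n) (H : HC a b) S
  (Hdinf : to_inf S (fun n => d (a n) (b n))) C
  (HCb : infS (fun n => S n /\ d o (b n) <= C)) : False.
Proof.
  assert (C0 : 0 <= C).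
  { destruct (HCb O) as [n [_ [_ h]]]. pose proof (d_nn o (b n)). lra. }
  set (U := fun m => S m /\ d o (b m) <= C /\ 2 * C <= d o (a m)).
  apply (SC2 a b Hab H (1/4) ltac:(lra) ltac:(lra) U).
  - intro N. destruct (Hdinf (3 * C)) as [N1 HN1].
    destruct (HCb (Nat.max N N1)) as [m [hm [Sm hb]]].
    exists m. split; [lia|]. specialize (HN1 m ltac:(lia) Sm). simpl in HN1.
    pose proof (d_tri (a m) o (b m)). pose proof (d_sym (a m) o).
    split; auto. split; auto. lra.
  - intros j [Sj [hbj haj]].
    destruct (Hdinf (4 * (C + d o (a j) + d o (b j) + d (a j) (b j)) + 1)) as [Nj HNj].
    exists Nj. intros m hm [Sm [hbm ham]]. specialize (HNj m hm Sm). simpl in HNj.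
    pose proof (d_tri (a m) o (b m)). pose proof (d_sym (a m) o).
    pose proof (d_tri (a j) o (b j)). pose proof (d_sym (a j) o).
    pose proof (d_tri o (a j) (a m)). pose proof (d_sym (a m) (a j)).
    pose proof (d_tri o (b j) (a m)). pose proof (d_sym (a m) (b j)).
    pose proof (d_tri o (b m) (a j)). pose proof (d_sym (a j) (b m)).
    pose proof (d_nn o (a j)). pose proof (d_nn o (b j)). pose proof (d_nn (a j) (b j)).
    unfold Psep. repeat split; lra.
Qed.

Lemma K4iii a b (Hab : forall n, a n <> b n) (H : HC a b) S
  (Hdinf : to_inf S (fun n => d (a n) (b n))) (Hbinf : to_inf S (fun n => d o (b n)))
  (HU : infS (fun n => S n /\ d (a n) (b n) / 2 <= d o (a n))) : False.
Proof.
  apply (SC2 a b Hab H (1/4) ltac:(lra) ltac:(lra) _ HU).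
  intros j [Sj haj].
  destruct (Hdinf (4 * (d o (a j) + d o (b j) + d (a j) (b j)))) as [N1 HN1].
  destruct (Hbinf (d o (a j) + d (a j) (b j))) as [N2 HN2].
  exists (Nat.max N1 N2). intros m hm [Sm ham].
  specialize (HN1 m ltac:(lia) Sm). specialize (HN2 m ltac:(lia) Sm). simpl in HN1, HN2.
  pose proof (d_tri o (a j) (a m)). pose proof (d_sym (a m) (a j)).
  pose proof (d_tri o (b j) (a m)). pose proof (d_sym (a m) (b j)).
  pose proof (d_tri o (a j) (b m)).
  pose proof (d_nn o (a j)). pose proof (d_nn o (b j)). pose proof (d_nn (a j) (b j)).
  pose proof (d_nn (a m) (b m)).
  unfold Psep. repeat split; lra.
Qed.

Lemma to_inf_swap S a b : to_inf S (fun n => d (a n) (b n)) -> to_inf S (fun n => d (b n) (a n)).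
Proof.
  intros h M. destruct (h M) as [N HN]. exists N. intros n hn Sn. rewrite d_sym. apply HN; auto.
Qed.

Lemma not_bounded_inf S (u : nat -> R) : ~ (exists C, infS (fun n => S n /\ u n <= C)) -> to_inf S u.
Proof.
  intros h M. destruct (not_inf_ev (fun n => S n /\ u n <= M)) as [N HN].
  { intro hi. apply h. exists M; auto. }
  exists N. intros n hn Sn. destruct (Rle_lt_dec M (u n)) as [h'|h']; auto.
  exfalso. apply (HN n hn). split; auto; lra.
Qed.

Lemma K4 a b (Hab : forall n, a n <> b n) (H : HC a b) S (HS : infS S)
  (Hdinf : to_inf S (fun n => d (a n) (b n))) : False.
Proof.
  pose proof (fun n e => Hab n (eq_sym e)) as Hba.
  pose proof (HC_swap a b H) as H'.
  destruct (classic (exists C, infS (fun n => S n /\ d o (b n) <= C))) as [[C hC]|hb].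
  { exact (K4i a b Hab H S Hdinf C hC). }
  destruct (classic (exists C, infS (fun n => S n /\ d o (a n) <= C))) as [[C hC]|ha].
  { exact (K4i b a Hba H' S (to_inf_swap S a b Hdinf) C hC). }
  apply not_bounded_inf in hb. apply not_bounded_inf in ha.
  destruct (classic (infS (fun n => S n /\ d (a n) (b n) / 2 <= d o (a n)))) as [hu|hu].
  { exact (K4iii a b Hab H S Hdinf hb hu). }
  apply (K4iii b a Hba H' S (to_inf_swap S a b Hdinf) ha).
  destruct (not_inf_ev _ hu) as [N0 HN0].
  intro N. destruct (HS (Nat.max N N0)) as [n [hn Sn]]. exists n. split; [lia|]. split; auto.
  destruct (Rle_lt_dec (d (a n) (b n) / 2) (d o (a n))) as [h|h].
  - exfalso. apply (HN0 n ltac:(lia)). auto.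
  - pose proof (d_tri (a n) o (b n)). pose proof (d_sym (a n) o). pose proof (d_sym (a n) (b n)). lra.
Qed.

Fixpoint SsF (S0 : nat -> Prop) (p : nat -> T) (cen : (nat -> Prop) -> nat -> nat) (k : nat) : nat -> Prop :=
  match k with
  | O => S0
  | S k' => fun m => SsF S0 p cen k' m /\ d (p m) (p (cen (SsF S0 p cen k') k')) < / INR (S k')
  end.

Fixpoint nF (g : nat -> nat -> nat) (k : nat) : nat :=
  match k with O => g O O | S k' => g (S k') (S (nF g k')) end.

Lemma strict_mono_lt (phi : nat -> nat) : (forall k, (phi k < phi (S k))%nat) ->
  forall k K, (k < K)%nat -> (phi k < phi K)%nat.
Proof.
  intros H k K hk. induction K; [lia|].
  destruct (Nat.eq_dec k K) as [->|hne]; [apply H|]. specialize (IHK ltac:(lia)). specialize (H K). lia.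
Qed.

Hypothesis Hc : complete_metric d.

Lemma DL (p : nat -> T) Sx (HS : infS Sx) :
  (exists S1 eps, (forall n, S1 n -> Sx n) /\ infS S1 /\ 0 < eps /\
     forall j, S1 j -> exists N, forall m, (N <= m)%nat -> S1 m -> eps <= d (p m) (p j)) \/
  (exists S1 x, (forall n, S1 n -> Sx n) /\ infS S1 /\ conv_along S1 p x).
Proof.
  destruct (classic (exists S1 eps, (forall n, S1 n -> Sx n) /\ infS S1 /\ 0 < eps /\
     forall j, S1 j -> exists N, forall m, (N <= m)%nat -> S1 m -> eps <= d (p m) (p j))) as [h|h];
    [left; exact h| right].
  assert (G : forall S1, (forall n, S1 n -> Sx n) -> infS S1 -> forall eps, 0 < eps ->
            exists j, infS (fun m => S1 m /\ d (p m) (p j) < eps)).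
  { intros S1 hS1 iS1 eps heps. apply NNPP. intro hn. apply h. exists S1, eps.
    repeat split; auto. intros j _.
    destruct (not_inf_ev (fun m => S1 m /\ d (p m) (p j) < eps)) as [N HN].
    { intro hi; apply hn; exists j; auto. }
    exists N. intros m hm Sm. destruct (Rle_lt_dec eps (d (p m) (p j))) as [h'|h']; auto.
    exfalso; apply (HN m hm); auto. }
  assert (Hcen : forall (S1 : nat -> Prop) (k : nat), exists j,
            ((forall n, S1 n -> Sx n) /\ infS S1) -> infS (fun m => S1 m /\ d (p m) (p j) < / INR (S k))).
  { intros S1 k. destruct (classic ((forall n, S1 n -> Sx n) /\ infS S1)) as [[h1 h2]|h1].
    - destruct (G S1 h1 h2 (/ INR (S k))) as [j hj].
      { apply Rinv_0_lt_compat. apply lt_0_INR. lia. }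
      exists j; auto.
    - exists O; intro; contradiction. }
  set (cen := fun S1 k => proj1_sig (constructive_indefinite_description _ (Hcen S1 k))).
  assert (Hcen' : forall S1 k, (forall n, S1 n -> Sx n) -> infS S1 ->
            infS (fun m => S1 m /\ d (p m) (p (cen S1 k)) < / INR (S k))).
  { intros S1 k h1 h2. exact (proj2_sig (constructive_indefinite_description _ (Hcen S1 k)) (conj h1 h2)). }
  set (Ss := SsF Sx p cen).
  assert (HSs : forall k, (forall n, Ss k n -> Sx n) /\ infS (Ss k)).
  { induction k; simpl. { split; auto. }
    destruct IHk as [h1 h2]. split.
    - intros n [hn _]. auto.
    - apply (Hcen' (Ss k) k h1 h2). }
  assert (Hnest : forall k k', (k <= k')%nat -> forall n, Ss k' n -> Ss k n).
  { intros k k' hk. induction hk; auto. intros n [hn _]. auto. }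
  assert (Hpick : forall (X : nat -> Prop) N, exists m, infS X -> (N <= m)%nat /\ X m).
  { intros X N. destruct (classic (infS X)) as [hX|hX].
    - destruct (hX N) as [m hm]. exists m; auto.
    - exists O; intro; contradiction. }
  set (pick := fun X N => proj1_sig (constructive_indefinite_description _ (Hpick X N))).
  assert (Hpick' : forall X N, infS X -> (N <= pick X N)%nat /\ X (pick X N)).
  { intros X N hX. exact (proj2_sig (constructive_indefinite_description _ (Hpick X N)) hX). }
  set (nk := nF (fun k N => pick (Ss (S k)) N)).
  assert (Hnk : forall k, Ss (S k) (nk k) /\ (k = O \/ exists k', k = S k' /\ (nk k' < nk k)%nat)).
  { intro k. destruct k.
    - split; [apply (Hpick' (Ss 1%nat) O (proj2 (HSs 1%nat)))|left; auto].
    - split.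
      + apply (Hpick' (Ss (S (S k))) _ (proj2 (HSs (S (S k))))).
      + right. exists k. split; auto.
        apply (Hpick' (Ss (S (S k))) _ (proj2 (HSs (S (S k))))). }
  assert (mono : forall k, (nk k < nk (S k))%nat).
  { intro k. destruct (Hnk (S k)) as [_ [h1|[k' [e h1]]]]; [discriminate|]. injection e as <-. auto. }
  assert (Hball : forall k k', (k <= k')%nat -> d (p (nk k')) (p (cen (Ss k) k)) < / INR (S k)).
  { intros k k' hk. destruct (Hnk k') as [h1 _].
    apply (Hnest (S k) (S k') ltac:(lia)) in h1. destruct h1 as [_ h1]. exact h1. }
  destruct (Hc (fun k => p (nk k))) as [x Hx].
  { intros eps heps. destruct (archimed_cor1 (eps/2)) as [N [hN hN0]]; [lra|].
    exists N. intros m n hm hn.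
    pose proof (Hball N m hm). pose proof (Hball N n hn).
    pose proof (d_tri (p (nk m)) (p (cen (Ss N) N)) (p (nk n))).
    pose proof (d_sym (p (cen (Ss N) N)) (p (nk n))).
    assert (/ INR (S N) <= / INR N).
    { apply Rinv_le_contravar. apply lt_0_INR; lia. apply le_INR; lia. }
    lra. }
  exists (fun n => exists k, n = nk k), x. split; [|split].
  - intros n [k ->]. apply (proj1 (HSs (S k))). apply Hnk.
  - intro N. exists (nk N). split; [apply mono_ge; auto|]. exists N; auto.
  - intros eps heps. destruct (Hx eps heps) as [K HK]. exists (nk K).
    intros n hn [k ->]. apply HK.
    destruct (le_lt_dec K k) as [h'|h']; auto.
    pose proof (strict_mono_lt nk mono k K h'). lia.
Qed.

Lemma conv_sub S1 S2 p x : conv_along S1 p x -> (forall n, S2 n -> S1 n) -> conv_along S2 p x.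
Proof. intros h hs eps he. destruct (h eps he) as [N HN]. exists N; auto. Qed.

Lemma ML a b (Hab : forall n, a n <> b n) (H : HC a b) Sx (HS : infS Sx) :
  exists x y S', x <> y /\ (forall n, S' n -> Sx n) /\ infS S' /\ conv_along S' a x /\ conv_along S' b y.
Proof.
  pose proof (fun n e => Hab n (eq_sym e)) as Hba.
  pose proof (HC_swap a b H) as H'.
  destruct (classic (exists K, infS (fun n => Sx n /\ d (a n) (b n) <= K))) as [[K hK]|hK].
  2:{ exfalso; exact (K4 a b Hab H Sx HS (not_bounded_inf _ _ hK)). }
  destruct (DL a _ hK) as [[S1 [eps [sub [inf [e0 LF]]]]]|[S1 [x [sub1 [inf1 cva]]]]].
  { exfalso. apply (caseA a b Hab H S1 K inf) with eps; auto. intros n hn. apply (sub n hn). }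
  destruct (DL b _ inf1) as [[S2 [eps [sub [inf [e0 LF]]]]]|[S2 [y [sub2 [inf2 cvb]]]]].
  { exfalso. apply (caseA b a Hba H' S2 K inf) with eps; auto. intros n hn. rewrite d_sym. apply (sub1 n (sub n hn)). }
  destruct (classic (x = y)) as [<-|hxy].
  { exfalso. apply (K1 a b Hab H S2 x inf2 (conv_sub _ _ _ _ cva sub2) cvb). }
  exists x, y, S2. repeat split; auto.
  - intros n hn. apply (sub1 n (sub2 n hn)).
  - apply (conv_sub _ _ _ _ cva sub2).
Qed.

Lemma EST f x y a b : lipschitz_with d 1 f -> x <> y -> a <> b ->
  Rabs ((f a - f b) / d a b - (f x - f y) / d x y) <= 2 * (d a x + d b y) / d x y.
Proof.
  intros Hf hxy hab. pose proof (d_pos _ _ hxy) as pD. pose proof (d_pos _ _ hab) as pe.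
  set (r := (f a - f b) / d a b).
  assert (hr : Rabs r <= 1).
  { unfold r. unfold Rdiv; rewrite Rabs_mult, Rabs_inv, (Rabs_right (d a b)) by lra.
    apply Rmult_le_reg_r with (d a b); auto. unfold Rdiv. rewrite Rmult_assoc, Rinv_l by lra.
    pose proof (Hf a b). lra. }
  assert (hu : f a - f b = r * d a b) by (unfold r; field; lra).
  assert (h1 : Rabs (f a - f x) <= d a x) by (pose proof (Hf a x); lra).
  assert (h2 : Rabs (f b - f y) <= d b y) by (pose proof (Hf b y); lra).
  assert (h3 : Rabs (d x y - d a b) <= d a x + d b y).
  { pose proof (d_tri x a y). pose proof (d_tri a b y). pose proof (d_tri a x b). pose proof (d_tri x y b).
    pose proof (d_sym x a). pose proof (d_sym y b). apply Rabs_le; lra. }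
  assert (h4 : Rabs (r * d x y - (f x - f y)) <= 2 * (d a x + d b y)).
  { replace (r * d x y - (f x - f y)) with (r * (d x y - d a b) + ((f a - f x) - (f b - f y))) by (rewrite Rmult_minus_distr_l, <- hu; ring).
    eapply Rle_trans; [apply Rabs_triang|]. rewrite Rabs_mult.
    eapply Rle_trans with (1 * (d a x + d b y) + (d a x + d b y)).
    - apply Rplus_le_compat.
      + apply Rmult_le_compat; auto using Rabs_pos.
      + eapply Rle_trans; [apply Rabs_triang|]. rewrite Rabs_Ropp. lra.
    - lra. }
  replace (r - (f x - f y) / d x y) with ((r * d x y - (f x - f y)) / d x y) by (field; lra).
  unfold Rdiv; rewrite Rabs_mult, Rabs_inv, (Rabs_right (d x y)) by lra.
  unfold Rdiv. apply Rmult_le_compat_r; auto. left; apply Rinv_0_lt_compat; auto.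
Qed.

Lemma lim_along a b (Hab : forall n, a n <> b n) S (HS : infS S) x y (hxy : x <> y)
  (ha : conv_along S a x) (hb : conv_along S b y) f (Hf : Lip0_ball d o f) L
  (HL : Un_cv (fun n => (f (a n) - f (b n)) / d (a n) (b n)) L) :
  L = (f x - f y) / d x y.
Proof.
  pose proof (d_pos _ _ hxy) as pD.
  apply NNPP. intro hne. set (V := (f x - f y) / d x y) in *.
  assert (he : 0 < Rabs (L - V)) by (apply Rabs_pos_lt; lra).
  set (eps := Rabs (L - V) / 3).
  destruct (HL eps) as [N1 HN1]; [unfold eps; lra|].
  destruct (ha (eps * d x y / 4)) as [N2 HN2]; [unfold eps; apply Rmult_lt_0_compat; try lra; apply Rmult_lt_0_compat; lra|].
  destruct (hb (eps * d x y / 4)) as [N3 HN3]; [unfold eps; apply Rmult_lt_0_compat; try lra; apply Rmult_lt_0_compat; lra|].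
  destruct (HS (Nat.max N1 (Nat.max N2 N3))) as [n [hn Sn]].
  specialize (HN1 n ltac:(lia)). specialize (HN2 n ltac:(lia) Sn). specialize (HN3 n ltac:(lia) Sn).
  unfold R_dist in HN1.
  pose proof (EST f x y (a n) (b n) (proj2 Hf) hxy (Hab n)) as hE. fold V in hE.
  assert (2 * (d (a n) x + d (b n) y) / d x y < eps).
  { replace (2 * (d (a n) x + d (b n) y) / d x y) with ((2 * (d (a n) x + d (b n) y)) * / d x y) by reflexivity.
    apply Rmult_lt_reg_r with (d x y); auto. rewrite Rmult_assoc, Rinv_l by lra. lra. }
  assert (Rabs (L - V) <= Rabs (L - (f (a n) - f (b n)) / d (a n) (b n)) + Rabs ((f (a n) - f (b n)) / d (a n) (b n) - V)).
  { replace (L - V) with ((L - (f (a n) - f (b n)) / d (a n) (b n)) + ((f (a n) - f (b n)) / d (a n) (b n) - V)) by ring.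
    apply Rabs_triang. }
  rewrite (Rabs_minus_sym L ((f (a n) - f (b n)) / d (a n) (b n))) in H0. unfold eps in *. lra.
Qed.

Lemma uniq x y x' y' : x <> y -> x' <> y' ->
  (forall f, Lip0_ball d o f -> (f x - f y) / d x y = (f x' - f y') / d x' y') -> x = x' /\ y = y'.
Proof.
  intros hxy hxy' H.
  set (e := fun i : nat => if Nat.even i then x else y').
  specialize (H _ (Dinf_ball e)).
  pose proof (d_pos _ _ hxy) as p1. pose proof (d_pos _ _ hxy') as p2.
  assert (Dx : Dinf e x = 0).
  { pose proof (Dinf_le e x 0%nat) as Hq. assert (E0 : e 0%nat = x) by reflexivity. rewrite E0, d_refl in Hq. pose proof (Dinf_nn e x). lra. }
  assert (Dy' : Dinf e y' = 0).
  { pose proof (Dinf_le e y' 1%nat) as Hq. assert (E0 : e 1%nat = y') by reflexivity. rewrite E0, d_refl in Hq. pose proof (Dinf_nn e y'). lra. }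
  cbv beta in H. rewrite Dx, Dy' in H.
  replace ((0 - Dinf e o - (Dinf e y - Dinf e o)) / d x y) with (- (Dinf e y / d x y)) in H by (field; lra).
  replace ((Dinf e x' - Dinf e o - (0 - Dinf e o)) / d x' y') with (Dinf e x' / d x' y') in H by (field; lra).
  pose proof (Dinf_nn e y). pose proof (Dinf_nn e x').
  assert (0 <= Dinf e y / d x y) by (unfold Rdiv; apply Rmult_le_pos; [lra|left; apply Rinv_0_lt_compat; lra]).
  assert (0 <= Dinf e x' / d x' y') by (unfold Rdiv; apply Rmult_le_pos; [lra|left; apply Rinv_0_lt_compat; lra]).
  assert (Dinf e y / d x y = 0) by lra. assert (Dinf e x' / d x' y' = 0) by lra.
  assert (Dy : Dinf e y = 0).
  { apply Rmult_eq_reg_r with (/ d x y). rewrite Rmult_0_l. exact H4. apply Rinv_neq_0_compat; lra. }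
  assert (Dx' : Dinf e x' = 0).
  { apply Rmult_eq_reg_r with (/ d x' y'). rewrite Rmult_0_l. exact H5. apply Rinv_neq_0_compat; lra. }
  assert (my : Rmin (d y x) (d y y') <= Dinf e y).
  { apply Dinf_ge. intro i. unfold e. destruct (Nat.even i); [apply Rmin_l|apply Rmin_r]. }
  assert (mx : Rmin (d x' x) (d x' y') <= Dinf e x').
  { apply Dinf_ge. intro i. unfold e. destruct (Nat.even i); [apply Rmin_l|apply Rmin_r]. }
  rewrite (d_sym y x) in my.
  split.
  - apply eq_sym, d_eq0. pose proof (d_nn x' x). unfold Rmin in mx. destruct (Rle_dec (d x' x) (d x' y')); lra.
  - apply d_eq0. pose proof (d_nn y y'). unfold Rmin in my. destruct (Rle_dec (d x y) (d y y')); lra.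
Qed.

Lemma not_conv_inf p x : ~ conv_along (fun _ => True) p x ->
  exists eps, 0 < eps /\ infS (fun n => eps <= d (p n) x).
Proof.
  intro h. apply not_all_ex_not in h. destruct h as [eps h].
  apply imply_to_and in h. destruct h as [he h]. exists eps. split; auto.
  intro N. apply NNPP. intro hn. apply h. exists N. intros n hN _.
  destruct (Rle_lt_dec eps (d (p n) x)) as [h'|h']; auto. exfalso; apply hn. exists n; auto.
Qed.

Lemma main_res xs ys (Hxy : forall n, xs n <> ys n) mu (Hmu : in_free d o mu)
  (Hw : weak_cv d o (fun n => molecule d (xs n) (ys n)) mu) :
  exists x y : T, x <> y /\ feq d o mu (molecule d x y) /\
    norm_cv d o (fun n => molecule d (xs n) (ys n)) (molecule d x y).
Proof.
  assert (H0 : forall f, Lip0_ball d o f ->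
            Un_cv (fun n => (f (xs n) - f (ys n)) / d (xs n) (ys n)) (mu f)).
  { intros f Hf. apply (Hw (fun nu => nu f)). split.
    - intros; reflexivity.
    - exists 1. intros nu c _ Hle. specialize (Hle f Hf). lra. }
  assert (HCx : HC xs ys) by (intros f Hf; exists (mu f); apply H0; auto).
  assert (infT : infS (fun _ => True)) by (intro N; exists N; auto).
  destruct (ML xs ys Hxy HCx _ infT) as [x [y [S' [hxy [_ [inf' [cva cvb]]]]]]].
  assert (Hme : forall f, Lip0_ball d o f -> mu f = (f x - f y) / d x y).
  { intros f Hf. exact (lim_along xs ys Hxy S' inf' x y hxy cva cvb f Hf _ (H0 f Hf)). }
  assert (cx : conv_along (fun _ => True) xs x).
  { apply NNPP. intro hn. destruct (not_conv_inf _ _ hn) as [eps [he hi]].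
    destruct (ML xs ys Hxy HCx _ hi) as [x' [y' [S'' [hxy' [sub [inf'' [cva' cvb']]]]]]].
    assert (Hme' : forall f, Lip0_ball d o f -> mu f = (f x' - f y') / d x' y').
    { intros f Hf. exact (lim_along xs ys Hxy S'' inf'' x' y' hxy' cva' cvb' f Hf _ (H0 f Hf)). }
    destruct (uniq x y x' y' hxy hxy') as [<- _].
    { intros f Hf. rewrite <- Hme, <- Hme'; auto. }
    destruct (cva' eps he) as [N HN]. destruct (inf'' N) as [n [hn2 Sn]].
    specialize (HN n hn2 Sn). specialize (sub n Sn). simpl in sub. lra. }
  assert (cy : conv_along (fun _ => True) ys y).
  { apply NNPP. intro hn. destruct (not_conv_inf _ _ hn) as [eps [he hi]].
    destruct (ML xs ys Hxy HCx _ hi) as [x' [y' [S'' [hxy' [sub [inf'' [cva' cvb']]]]]]].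
    assert (Hme' : forall f, Lip0_ball d o f -> mu f = (f x' - f y') / d x' y').
    { intros f Hf. exact (lim_along xs ys Hxy S'' inf'' x' y' hxy' cva' cvb' f Hf _ (H0 f Hf)). }
    destruct (uniq x y x' y' hxy hxy') as [_ <-].
    { intros f Hf. rewrite <- Hme, <- Hme'; auto. }
    destruct (cvb' eps he) as [N HN]. destruct (inf'' N) as [n [hn2 Sn]].
    specialize (HN n hn2 Sn). specialize (sub n Sn). simpl in sub. lra. }
  pose proof (d_pos _ _ hxy) as pD.
  exists x, y. split; [exact hxy|]. split.
  - intros f Hf. pose proof Hf as [f0 [L HL]].
    set (L' := Rabs L + 1).
    assert (pL : 0 < L') by (unfold L'; pose proof (Rabs_pos L); lra).
    set (g := fun t => / L' * f t + 0 * f t).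
    assert (Hg : Lip0_ball d o g).
    { split.
      - unfold g. rewrite f0. ring.
      - intros s t. unfold g.
        replace (/ L' * f s + 0 * f s - (/ L' * f t + 0 * f t)) with (/ L' * (f s - f t)) by ring.
        rewrite Rabs_mult, (Rabs_right (/ L')) by (left; apply Rinv_0_lt_compat; auto).
        specialize (HL s t). pose proof (d_nn s t). pose proof (Rle_abs L).
        assert (L * d s t <= L' * d s t) by (unfold L'; nra).
        apply Rmult_le_reg_l with L'; auto. rewrite <- Rmult_assoc, Rinv_r by lra. lra. }
    pose proof (Hme g Hg) as e1.
    destruct Hmu as [[Hlin _] _].
    unfold g in e1. rewrite (Hlin f f (/ L') 0 Hf Hf) in e1.
    unfold molecule.
    apply Rmult_eq_reg_l with (/ L'); [|apply Rinv_neq_0_compat; lra].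
    rewrite Rmult_0_l, Rplus_0_r in e1. rewrite e1. field. lra.
  - intros eps heps.
    destruct (cx (eps * d x y / 4)) as [N1 HN1]; [apply Rmult_lt_0_compat; try lra; apply Rmult_lt_0_compat; lra|].
    destruct (cy (eps * d x y / 4)) as [N2 HN2]; [apply Rmult_lt_0_compat; try lra; apply Rmult_lt_0_compat; lra|].
    exists (Nat.max N1 N2). intros n hn f Hf. unfold fsub, molecule.
    specialize (HN1 n ltac:(lia) I). specialize (HN2 n ltac:(lia) I).
    pose proof (EST f x y (xs n) (ys n) (proj2 Hf) hxy (Hxy n)) as hE.
    assert (2 * (d (xs n) x + d (ys n) y) / d x y < eps).
    { replace (2 * (d (xs n) x + d (ys n) y) / d x y) with ((2 * (d (xs n) x + d (ys n) y)) * / d x y) by reflexivity.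
      apply Rmult_lt_reg_r with (d x y); auto. rewrite Rmult_assoc, Rinv_l by lra. lra. }
    lra.
Qed.

End Main.

Theorem corollary2p14 (T : Type) (d : T -> T -> R) (o : T)
  (Hd : is_metric d) (Hc : complete_metric d)
  (xs ys : nat -> T) (Hxy : forall n, xs n <> ys n)
  (mu : functional T) (Hmu : in_free d o mu)
  (Hw : weak_cv d o (fun n => molecule d (xs n) (ys n)) mu) :
  exists x y : T, x <> y /\
    feq d o mu (molecule d x y) /\
    norm_cv d o (fun n => molecule d (xs n) (ys n)) (molecule d x y).
Proof.
  exact (main_res T d o Hd Hc xs ys Hxy mu Hmu Hw).
Qed.
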